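(* An irreducible plane algebraic curve of degree $d$ has at most $4d$ symmetries, unless it is a line or a circle.
   Context: A plane algebraic curve is an infinite set $Z_{\mathbb{R}}(f)=\{(a,b)\in\mathbb{R}^2: f(a,b)=0\}$ for some nonzero $f\in\mathbb{R}[x,y]$; its degree is the minimum degree of such an $f$; it is irreducible if $f$ can be chosen irreducible over $\mathbb{R}$. A symmetry of a curve $C$ is an isometry $T$ of $\mathbb{R}^2$ with $T(C)=C$. *)

(* Defs.v *)
From HB Require Import structures.
From mathcomp Require Import all_boot all_order all_algebra.
From mathcomp Require Import reals.
From mathcomp Require Import mpoly.
Set Implicit Arguments. Unset Strict Implicit. Unset Printing Implicit Defensive.
Import Order.TTheory GRing.Theory Num.Theory.
Local Open Scope ring_scope.

Section PlaneCurves.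
Variable R : realType.

(* the point (a,b) of R^2 as a valuation of the two variables x = 'X_0, y = 'X_1 *)
Definition pt2 (p : R * R) : 'I_2 -> R :=
  fun i => if val i == 0%N then p.1 else p.2.

Definition zero_set (f : {mpoly R[2]}) (p : R * R) : Prop := f.@[pt2 p] = 0.

Definition same_set (A B : R * R -> Prop) : Prop := forall p, A p <-> B p.

Definition infinite_set (A : R * R -> Prop) : Prop :=
  forall s : seq (R * R), exists p, A p /\ p \notin s.

(* total degree of a polynomial (msize = 1 + degree) *)
Definition tdeg (f : {mpoly R[2]}) : nat := (msize f).-1.

Definition plane_curve (C : R * R -> Prop) : Prop :=
  infinite_set C /\ exists f : {mpoly R[2]}, f != 0 /\ same_set C (zero_set f).

Definition curve_degree (C : R * R -> Prop) (d : nat) : Prop :=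
  (exists f : {mpoly R[2]}, [/\ f != 0, same_set C (zero_set f) & tdeg f = d]) /\
  (forall f : {mpoly R[2]}, f != 0 -> same_set C (zero_set f) -> (d <= tdeg f)%N).

Definition mirreducible (f : {mpoly R[2]}) : Prop :=
  (1 < msize f)%N /\
  forall g h : {mpoly R[2]}, f = g * h -> (msize g <= 1)%N \/ (msize h <= 1)%N.

Definition irreducible_curve (C : R * R -> Prop) : Prop :=
  exists f : {mpoly R[2]}, mirreducible f /\ same_set C (zero_set f).

Definition sqdist (p q : R * R) : R := (p.1 - q.1) ^+ 2 + (p.2 - q.2) ^+ 2.

Definition isometry (T : R * R -> R * R) : Prop :=
  forall p q, sqdist (T p) (T q) = sqdist p q.

Definition symmetry_of (C : R * R -> Prop) (T : R * R -> R * R) : Prop :=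
  isometry T /\ forall p, (exists q, C q /\ T q = p) <-> C p.

Definition is_line (C : R * R -> Prop) : Prop :=
  exists a b c : R, (a, b) != (0, 0) /\
    forall p : R * R, C p <-> a * p.1 + b * p.2 + c = 0.

Definition is_circle (C : R * R -> Prop) : Prop :=
  exists a b r : R, 0 < r /\
    forall p : R * R, C p <-> (p.1 - a) ^+ 2 + (p.2 - b) ^+ 2 = r ^+ 2.

End PlaneCurves.

(* Main.v *)
From HB Require Import structures.
From mathcomp Require Import all_boot all_order all_algebra.
From mathcomp Require Import reals.
From mathcomp Require Import mpoly.
From mathcomp Require Import zify ring lra.
Require Import Defs.
From Stdlib Require Import IndefiniteDescription FunctionalExtensionality.
Set Implicit Arguments. Unset Strict Implicit. Unset Printing Implicit Defensive.
Import Order.TTheory GRing.Theory Num.Theory.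
Local Open Scope ring_scope.

Section Morph.
Variable R : realType.
Notation P2 := {poly {poly R}}.
Notation MP := {mpoly R[2]}.

Lemma mmap_rmorph (S S' : comNzRingType) (f : {rmorphism R -> S}) (h : 'I_2 -> S)
  (phi : {rmorphism S -> S'}) (p : MP) :
  phi (mmap f h p) = mmap (phi \o f) (phi \o h) p.
Proof.
rewrite /mmap rmorph_sum; apply: eq_bigr => m _.
rewrite rmorphM /mmap1 rmorph_prod /=; congr (_ * _).
by apply: eq_bigr => i _; rewrite rmorphXn.
Qed.

Lemma mmap_ext (S : comNzRingType) (f1 f2 : R -> S) (h1 h2 : 'I_2 -> S) (p : MP) :
  f1 =1 f2 -> h1 =1 h2 -> mmap f1 h1 p = mmap f2 h2 p.
Proof.
move=> ef eh; rewrite /mmap; apply: eq_bigr => m _.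
by rewrite ef (mmap1_eq _ eh).
Qed.

Lemma mmap_idX (p : MP) : mmap (@mpolyC 2 R) (fun i => 'X_i) p = p.
Proof.
rewrite -[RHS]comp_mpoly_id /comp_mpoly; apply: mmap_ext => // i.
by rewrite tnth_map tnth_ord_tuple.
Qed.

Definition hvar (i k : 'I_2) : P2 := if k == i then 'X else ('X)%:P.
Definition fwd (i : 'I_2) (f : MP) : P2 :=
  mmap (polyC \o polyC : {rmorphism R -> P2}) (hvar i) f.


Lemma cfu_mp (j : 'I_2) : commr_rmorph (@mpolyC 2 R) 'X_j.
Proof. by move=> x; rewrite /GRing.comm mulrC. Qed.
Definition phij (j : 'I_2) : {rmorphism {poly R} -> MP} := horner_morph (cfu_mp j).
Lemma cfu_b (i j : 'I_2) : commr_rmorph (phij j) 'X_i.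
Proof. by move=> x; rewrite /GRing.comm mulrC. Qed.
Definition back (i j : 'I_2) : {rmorphism P2 -> MP} := horner_morph (cfu_b i j).

Lemma back_fwd (i j : 'I_2) (f : MP) : i != j -> back i j (fwd i f) = f.
Proof.
move=> nij; rewrite /fwd mmap_rmorph -[RHS]mmap_idX; apply: mmap_ext => [c|k] /=.
  rewrite (horner_morphC (cfu_b i j)); exact: (horner_morphC (cfu_mp j)).
rewrite /hvar; case: eqP => [->|/eqP nki].
  exact: (horner_morphX (cfu_b i j)).
rewrite (horner_morphC (cfu_b i j)) [phij j _](horner_morphX (cfu_mp j)).
suff -> : j = k by [].
apply/eqP; move: nij nki; case: i j k => [[|[|i]] Hi] [[|[|j]] Hj] [[|[|k]] Hk] //.
Qed.

Lemma cfu_e (i j : 'I_2) (v : 'I_2 -> R) : commr_rmorph (horner_eval (v j)) (v i).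
Proof. by move=> x; rewrite /GRing.comm mulrC. Qed.
Definition ev (i j : 'I_2) (v : 'I_2 -> R) : {rmorphism P2 -> R} :=
  horner_morph (cfu_e i j v).

Lemma ev_fwd (i j : 'I_2) v (f : MP) : i != j -> ev i j v (fwd i f) = f.@[v].
Proof.
move=> nij; rewrite /fwd mmap_rmorph /meval; apply: mmap_ext => [c|k] /=.
  rewrite (horner_morphC (cfu_e i j v)); exact: hornerC.
rewrite /hvar; case: eqP => [->|/eqP nki].
  exact: (horner_morphX (cfu_e i j v)).
rewrite (horner_morphC (cfu_e i j v)).
suff -> : j = k by exact: hornerX.
apply/eqP; move: nij nki; case: i j k => [[|[|i]] Hi] [[|[|j]] Hj] [[|[|k]] Hk] //.
Qed.

Lemma meval_phij j v (c : {poly R}) : (phij j c).@[v] = c.[v j].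
Proof.
rewrite /= /horner_morph -horner_map -[X in _.[X]]/(meval v 'X_j) mevalXU -map_poly_comp.
rewrite (@eq_map_poly _ _ _ idfun) ?map_poly_id // => x /=; exact: mevalC.
Qed.

Lemma ev_back (i j : 'I_2) v (P : P2) : (back i j P).@[v] = ev i j v P.
Proof.
rewrite /= /horner_morph -horner_map -[X in _.[X]]/(meval v 'X_i) mevalXU -map_poly_comp.
congr (_.[_]); apply: eq_map_poly => x /=; exact: meval_phij.
Qed.
End Morph.
Arguments back {R}.
Arguments phij {R}.
Arguments hvar {R}.


Section Subst.
Variable R : realType.
Notation MP := {mpoly R[2]}.
Definition i0 : 'I_2 := ord0.
Definition i1 : 'I_2 := ord_max.

Lemma size_mul_deg (p q : {poly R}) a b :
  (size p <= a.+1)%N -> (size q <= b.+1)%N -> (size (p * q)%R <= (a + b).+1)%N.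
Proof.
move=> hp hq; apply: leq_trans (size_polyMleq p q) _; lia.
Qed.

Lemma size_exp_deg (p : {poly R}) k e :
  (size p <= k.+1)%N -> (size (p ^+ e)%R <= (k * e).+1)%N.
Proof.
move=> hp; elim: e => [|e IH]; first by rewrite expr0 size_poly1.
by rewrite exprS mulnS; apply: size_mul_deg.
Qed.

Definition subst (g : MP) (hx hy hw : {poly R}) : {poly R} :=
  \sum_(m <- msupp g) (g@_m *: (hx ^+ m i0 * hy ^+ m i1 * hw ^+ ((msize g).-1 - (m i0 + m i1)))).

Lemma mdeg2 (m : 'X_{1..2}) : mdeg m = (m i0 + m i1)%N.
Proof. rewrite mdegE big_ord_recr big_ord1 /=; congr (m _ + m _); exact/val_inj. Qed.

Lemma subst_size g (hx hy hw : {poly R}) k :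
  (size hx <= k.+1)%N -> (size hy <= k.+1)%N -> (size hw <= k.+1)%N ->
  (size (subst g hx hy hw) <= (k * (msize g).-1).+1)%N.
Proof.
move=> sx sy sw; rewrite /subst big_seq; apply: (big_ind (fun p : {poly R} => size p <= _)%N).
- by rewrite size_poly0.
- move=> p q hp hq; apply: leq_trans (size_polyD p q) _; by rewrite geq_max hp hq.
move=> m hm; apply: leq_trans (size_scale_leq _ _) _.
have hd : (m i0 + m i1 <= (msize g).-1)%N.
  by rewrite -mdeg2 -ltnS prednK ?msize_mdeg_lt // (leq_ltn_trans _ (msize_mdeg_lt hm)).
set e := ((msize g).-1 - _)%N.
have -> : (k * (msize g).-1 = k * m i0 + k * m i1 + k * e)%N.
  by rewrite -!mulnDr /e subnKC.
apply: size_mul_deg; last exact: size_exp_deg.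
apply: size_mul_deg; exact: size_exp_deg.
Qed.

Lemma meval_pt2 (g : MP) (x y : R) :
  g.@[pt2 (x, y)] = \sum_(m <- msupp g) g@_m * (x ^+ m i0 * y ^+ m i1).
Proof.
rewrite mevalE; apply: eq_bigr => m _; congr (_ * _).
rewrite big_ord_recr big_ord1 /pt2 /=; congr (_ ^+ m _ * _ ^+ m _); exact/val_inj.
Qed.

Lemma subst_eval g (hx hy hw : {poly R}) t :
  hw.[t] != 0 ->
  (subst g hx hy hw).[t] =
    hw.[t] ^+ (msize g).-1 * g.@[pt2 (hx.[t] / hw.[t], hy.[t] / hw.[t])].
Proof.
move=> hw0; rewrite meval_pt2 /subst horner_sum mulr_sumr !big_seq; apply: eq_bigr => m hm.
have hd : (m i0 + m i1 <= (msize g).-1)%N.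
  by rewrite -mdeg2 -ltnS prednK ?msize_mdeg_lt // (leq_ltn_trans _ (msize_mdeg_lt hm)).
rewrite hornerZ !hornerM !horner_exp.
set w := hw.[t]; set X := hx.[t]; set Y := hy.[t].
set D := (msize g).-1; set e := (D - _)%N.
have -> : w ^+ D = w ^+ e * (w ^+ m i0 * w ^+ m i1) by rewrite -exprD -exprD subnK.
rewrite !expr_div_n.
have ha : w ^+ m i0 != 0 by rewrite expf_neq0.
have hb : w ^+ m i1 != 0 by rewrite expf_neq0.
move: ha hb; set A := X ^+ _; set B := Y ^+ _; set a := w ^+ m i0; set b := w ^+ m i1; set E := w ^+ e.
move=> ha hb; field; by rewrite ha hb.
Qed.

Lemma poly_many_roots (p : {poly R}) (rs : seq R) :
  uniq rs -> all (root p) rs -> (size p <= size rs)%N -> p = 0.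
Proof.
move=> u a s; apply/eqP; apply: contraTT s => nz.
by rewrite -ltnNge max_poly_roots.
Qed.

End Subst.

Section Div.
Variable R : realType.
Notation P2 := {poly {poly R}}.
Notation MP := {mpoly R[2]}.

Lemma ev_C (i j : 'I_2) (v : 'I_2 -> R) (c : {poly R}) : ev i j v c%:P = c.[v j].
Proof. exact: (horner_morphC (cfu_e i j v)). Qed.

Lemma ev_X (i j : 'I_2) (v : 'I_2 -> R) : ev i j v 'X = v i.
Proof. exact: (horner_morphX (cfu_e i j v)). Qed.

Lemma irr_factor (f h q : MP) :
  mirreducible f -> f = h * q -> (exists v1 v2, q.@[v1] != q.@[v2]) ->
  exists c : R, c != 0 /\ forall v, f.@[v] = c * q.@[v].
Proof.
move=> [sf irr] fhq [v1 [v2 nq]].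
case: (irr _ _ fhq) => hs; last first.
  by move: nq; rewrite (msize1_polyC hs) !mevalC eqxx.
have hc := msize1_polyC hs.
exists h@_0; split.
  apply/eqP => h0; move: sf; rewrite fhq hc h0 mpolyC0 mul0r msize0 //.
by move=> v; rewrite fhq mevalM {1}hc mevalC.
Qed.

Lemma div_core (i j : 'I_2) (f : MP) (Q : P2) :
  i != j -> Q \is monic -> Pdiv.CommonRing.rmodp (fwd i f) Q = 0 ->
  f = back i j (Pdiv.CommonRing.rdivp (fwd i f) Q) * back i j Q.
Proof.
move=> nij mQ r0.
have E := Pdiv.RingMonic.rdivp_eq mQ (fwd i f).
rewrite r0 addr0 in E.
by rewrite -rmorphM -E back_fwd.
Qed.

Lemma natr_uniq (N : nat) : uniq [seq (k%:R : R) | k <- iota 0 N].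
Proof.
by rewrite map_inj_uniq ?iota_uniq // => a b /eqP; rewrite eqr_nat => /eqP.
Qed.

Lemma poly_all_roots (p : {poly R}) : (forall x, p.[x] = 0) -> p = 0.
Proof.
move=> h; apply: (@poly_many_roots _ p [seq (k%:R : R) | k <- iota 0 (size p)]).
- exact: natr_uniq.
- by apply/allP => x _; rewrite /root h.
- by rewrite size_map size_iota.
Qed.

Lemma line_core (f : MP) (i j : 'I_2) (al be : R) :
  i != j -> mirreducible f ->
  (forall v : 'I_2 -> R, v i = al * v j + be -> f.@[v] = 0) ->
  exists c : R, c != 0 /\ forall v, f.@[v] = c * (v i - (al * v j + be)).
Proof.
move=> nij irr hz.
set Q : P2 := 'X - (al%:P * 'X + be%:P)%:P.
have mQ : Q \is monic by rewrite monicXsubC.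
have evQ v : ev i j v Q = v i - (al * v j + be).
  rewrite rmorphB ev_X ev_C /=.
  by rewrite hornerD hornerCM hornerX hornerC.
set F := fwd i f.
have hrm : Pdiv.CommonRing.rmodp F Q = 0.
  set rm := Pdiv.CommonRing.rmodp F Q.
  have srm : (size rm <= 1)%N.
    have := Pdiv.CommonRing.ltn_rmodpN0 F (monic_neq0 mQ).
    by rewrite size_XsubC.
  rewrite (size1_polyC srm).
  suff -> : rm`_0 = 0 by rewrite polyC0.
  apply: poly_all_roots => y.
  pose v : 'I_2 -> R := fun k => if k == i then al * y + be else y.
  have vj : v j = y by rewrite /v eq_sym (negbTE nij).
  have vi : v i = al * y + be by rewrite /v eqxx.
  have E := Pdiv.RingMonic.rdivp_eq mQ F.
  have := congr1 (ev i j v) E.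
  rewrite rmorphD rmorphM evQ vi vj subrr mulr0 add0r.
  rewrite /F ev_fwd // hz; last by rewrite vi vj.
  by move=> H; rewrite -/rm (size1_polyC srm) ev_C vj in H; rewrite H.
have fe := div_core nij mQ hrm.
have hq v : (back i j Q).@[v] = v i - (al * v j + be) by rewrite ev_back evQ.
have hne : exists v1 v2, (back i j Q).@[v1] != (back i j Q).@[v2].
  pose v2 : 'I_2 -> R := fun k => if k == i then 1 else 0.
  exists (fun _ => 0), v2; rewrite !hq /v2 eqxx (negbTE (_ : j != i)); last by rewrite eq_sym.
  rewrite !mulr0 !add0r; apply/eqP => h.
  have : (1 : R) = 0 by lra.
  by apply/eqP; rewrite oner_eq0.
have [c [c0 hc]] := irr_factor irr fe hne.
by exists c; split => // v; rewrite hc hq.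
Qed.

End Div.

Section Circ.
Variable R : realType.
Notation P2 := {poly {poly R}}.
Notation MP := {mpoly R[2]}.

Lemma roots_except (P : {poly R}) (xs : nat -> R) (e : R) :
  injective xs -> (forall k, xs k != e -> P.[xs k] = 0) -> P = 0.
Proof.
move=> inj h.
set s := [seq xs k | k <- iota 0 (size P).+1].
have us : uniq s by rewrite map_inj_uniq ?iota_uniq.
apply: (@poly_many_roots _ P (filter (predC1 e) s)).
- exact: filter_uniq.
- apply/allP => x; rewrite mem_filter => /andP [/= ne /mapP [k _ ex]].
  by rewrite /root ex h // -ex.
- rewrite (_ : filter _ s = rem e s); last by rewrite rem_filter.
  have [es|nes] := boolP (e \in s).
    by rewrite size_rem // size_map size_iota.
  by rewrite rem_id // size_map size_iota.
Qed.

Definition s1 (K : R) := (K ^+ 2 - 1) / (K ^+ 2 + 1).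
Definition s2 (K : R) := (2 * K) / (K ^+ 2 + 1).

Lemma sq1_pos (K : R) : K ^+ 2 + 1 != 0.
Proof. by rewrite paddr_eq0 ?sqr_ge0 // negb_and oner_eq0 orbT. Qed.

Lemma s12 (K : R) : s1 K ^+ 2 + s2 K ^+ 2 = 1.
Proof.
rewrite /s1 /s2; have := sq1_pos K; set D := K ^+ 2 + 1 => hD.
rewrite !expr_div_n -mulrDl.
have -> : (K ^+ 2 - 1) ^+ 2 + (2 * K) ^+ 2 = D ^+ 2 by rewrite /D; ring.
by rewrite divff // expf_neq0.
Qed.

Lemma s1_inj (k l : nat) : s1 k%:R = s1 l%:R -> k = l.
Proof.
rewrite /s1 => E.
have hk := sq1_pos k%:R; have hl := sq1_pos l%:R.
have E2 : ((k%:R : R) ^+ 2 - 1) * (l%:R ^+ 2 + 1) = (l%:R ^+ 2 - 1) * (k%:R ^+ 2 + 1).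
  move: E; set A := k%:R ^+ 2 - 1; set B := l%:R ^+ 2 - 1.
  set Ck := (k%:R : R) ^+ 2 + 1; set Cl := (l%:R : R) ^+ 2 + 1 => E.
  by rewrite -(divfK hk A) E mulrAC divfK.
have : (k%:R : R) ^+ 2 = l%:R ^+ 2 by move: E2 => ?; lra.
by rewrite -!natrX => /eqP; rewrite eqr_nat eqn_exp2r // => /eqP.
Qed.

End Circ.

Section Circ2.
Variable R : realType.
Notation P2 := {poly {poly R}}.
Notation MP := {mpoly R[2]}.

Lemma circle_core (f : MP) (a b r : R) (M : R * R) :
  0 < r -> mirreducible f ->
  (forall x y, (x - a) ^+ 2 + (y - b) ^+ 2 = r ^+ 2 -> (x, y) != M -> f.@[pt2 (x, y)] = 0) ->
  exists c : R, c != 0 /\ forall v, f.@[v] = c * ((v i0 - a) ^+ 2 + (v i1 - b) ^+ 2 - r ^+ 2).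
Proof.
move=> r0 irr hz.
have nij : i1 != i0 by [].
set lo : P2 := ((- (2 * b))%:P)%:P * 'X + (('X - a%:P) ^+ 2 + (b ^+ 2 - r ^+ 2)%:P)%:P.
set Q : P2 := 'X ^+ 2 + lo.
have slo : (size lo <= 2)%N.
  apply: leq_trans (size_polyD _ _) _; rewrite geq_max; apply/andP; split.
    apply: leq_trans (size_polyMleq _ _) _; rewrite size_polyX.
    by have := size_polyC_leq1 ((- (2 * b))%:P : {poly R}); case: (size _) => [|[|]].
  by apply: leq_trans (size_polyC_leq1 _) _.
have sQ : size Q = 3 by rewrite /Q size_polyDl ?size_polyXn // size_polyXn.
have mQ : Q \is monic by rewrite monicE /Q lead_coefDl ?lead_coefXn // size_polyXn.
have evQ v : ev i1 i0 v Q = (v i0 - a) ^+ 2 + (v i1 - b) ^+ 2 - r ^+ 2.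
  rewrite /Q /lo.
  set K1 : {poly R} := (- (2 * b))%:P.
  set K0 : {poly R} := ('X - a%:P) ^+ 2 + (b ^+ 2 - r ^+ 2)%:P.
  rewrite !rmorphD !rmorphM !ev_X !ev_C /K1 /K0.
  rewrite !hornerE /=. ring.
set F := fwd i1 f.
have hrm : Pdiv.CommonRing.rmodp F Q = 0.
  set rm := Pdiv.CommonRing.rmodp F Q.
  have srm : (size rm <= 2)%N.
    by have := Pdiv.CommonRing.ltn_rmodpN0 F (monic_neq0 mQ); rewrite sQ.
  have evr v : ev i1 i0 v rm = (rm`_0).[v i0] + (rm`_1).[v i0] * v i1.
    rewrite /= /horner_morph (@horner_coef_wide _ 2); last first.
      by apply: leq_trans (size_poly _ _) srm.
    rewrite big_ord_recr big_ord1 /= !coef_map /= expr0 expr1 mulr1.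
    done.
  have E := Pdiv.RingMonic.rdivp_eq mQ F.
  have key x y : (x - a) ^+ 2 + (y - b) ^+ 2 = r ^+ 2 -> (x, y) != M ->
      (rm`_0).[x] + (rm`_1).[x] * y = 0.
    move=> hc hM.
    pose v : 'I_2 -> R := fun k => if k == i1 then y else x.
    have := congr1 (ev i1 i0 v) E.
    rewrite rmorphD rmorphM evQ evr /v /= -/rm.
    have -> : (x - a) ^+ 2 + (y - b) ^+ 2 - r ^+ 2 = 0 by rewrite hc subrr.
    rewrite mulr0 add0r /F ev_fwd //.
    rewrite (@meval_eq _ _ _ (pt2 (x, y))); last first.
      by move=> k; rewrite /pt2 /v; case: k => [[|[|k]] Hk].
    by rewrite hz // => <-.
  pose xs (k : nat) := a + r * s1 (k.+1)%:R.
  have xinj : injective xs.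
    move=> k l; rewrite /xs => /addrI /(mulfI (lt0r_neq0 r0)) /s1_inj; by case.
  have onc k : (xs k - a) ^+ 2 + (b + r * s2 (k.+1)%:R - b) ^+ 2 = r ^+ 2 /\
               (xs k - a) ^+ 2 + (b - r * s2 (k.+1)%:R - b) ^+ 2 = r ^+ 2.
    have h := @s12 R (k.+1)%:R; rewrite /xs; move: h; set u := s1 _; set w := s2 _ => h.
    have e : forall u w : R, (r*u)^+2 + (r*w)^+2 = r^+2 * (u^+2+w^+2) by move=> ? ?; ring.
    have -> : a + r * u - a = r * u by ring.
    have -> : b + r * w - b = r * w by ring.
    have -> : b - r * w - b = - (r * w) by ring.
    by split; rewrite ?sqrrN e h mulr1.
  have s2nz k : r * s2 (k.+1)%:R != 0.
    apply: mulf_neq0; first exact: lt0r_neq0.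
    rewrite /s2; apply: mulf_neq0; last by rewrite invr_eq0 sq1_pos.
    by apply: mulf_neq0; rewrite pnatr_eq0.
  have both k : xs k != M.1 -> (rm`_1).[xs k] = 0 /\ (rm`_0).[xs k] = 0.
    move=> hx; have [c1 c2] := onc k.
    have ne1 : (xs k, b + r * s2 (k.+1)%:R) != M.
      by apply: contra hx => /eqP <-.
    have ne2 : (xs k, b - r * s2 (k.+1)%:R) != M.
      by apply: contra hx => /eqP <-.
    have e1 := key _ _ c1 ne1; have e2 := key _ _ c2 ne2.
    have h1 : (rm`_1).[xs k] * (2 * (r * s2 (k.+1)%:R)) = 0.
      move: e1 e2; set A := (rm`_0).[_]; set B := (rm`_1).[_]; set w := r * _ => e1 e2.
      have -> : B * (2 * w) = (A + B * (b + w)) - (A + B * (b - w)) by ring.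
      by rewrite e1 e2 subrr.
    have h1' : (rm`_1).[xs k] = 0.
      have := s2nz k; move: h1; set w := r * _ => h1 hw.
      by move/eqP: h1; rewrite mulf_eq0 mulf_eq0 (negbTE hw) pnatr_eq0 /= orbF => /eqP.
    split => //; by move: e1; rewrite h1' mul0r addr0.
  have r1 : rm`_1 = 0 by apply: (roots_except xinj (e := M.1)) => k /both [].
  have r0' : rm`_0 = 0 by apply: (roots_except xinj (e := M.1)) => k /both [].
  apply/polyP => k; rewrite coef0.
  case: k => [|[|k]] //; rewrite nth_default //.
  by apply: leq_trans srm _.
have fe := div_core nij mQ hrm.
have hq v : (back i1 i0 Q).@[v] = (v i0 - a) ^+ 2 + (v i1 - b) ^+ 2 - r ^+ 2.
  by rewrite ev_back evQ.
have hne : exists v1 v2, (back i1 i0 Q).@[v1] != (back i1 i0 Q).@[v2].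
  pose v1 : 'I_2 -> R := fun k => if k == i1 then b else a.
  pose v2 : 'I_2 -> R := fun k => if k == i1 then b else a + r.
  exists v1, v2; rewrite !hq /v1 /v2 /=.
  have -> : a + r - a = r by ring.
  rewrite !subrr expr0n /= !add0r.
  apply/eqP => h; have : r ^+ 2 = 0 by lra.
  by apply/eqP; rewrite expf_neq0 // lt0r_neq0.
have [c [c0 hc]] := irr_factor irr fe hne.
by exists c; split => // v; rewrite hc hq.
Qed.

End Circ2.

Section Geo.
Variable R : realType.

Definition rot (w t : R * R) (p : R * R) : R * R :=
  (w.1 * p.1 - w.2 * p.2 + t.1, w.2 * p.1 + w.1 * p.2 + t.2).
Definition rfl (w t : R * R) (p : R * R) : R * R :=
  (w.1 * p.1 + w.2 * p.2 + t.1, w.2 * p.1 - w.1 * p.2 + t.2).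
Definition unit2 (w : R * R) := w.1 ^+ 2 + w.2 ^+ 2 = 1.

Lemma iso_struct (T : R * R -> R * R) : isometry T ->
  exists w t, unit2 w /\ (T =1 rot w t \/ T =1 rfl w t).
Proof.
move=> H.
set t1 := (T (0, 0)).1; set t2 := (T (0, 0)).2.
set u1 := (T (1, 0)).1 - t1; set u2 := (T (1, 0)).2 - t2.
set v1 := (T (0, 1)).1 - t1; set v2 := (T (0, 1)).2 - t2.
have hu : u1 ^+ 2 + u2 ^+ 2 = 1.
  have := H (1, 0) (0, 0); rewrite /sqdist /= -/t1 -/t2 => ->; rewrite !subr0; ring.
have hv : v1 ^+ 2 + v2 ^+ 2 = 1.
  have := H (0, 1) (0, 0); rewrite /sqdist /= -/t1 -/t2 => ->; rewrite !subr0; ring.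
have huv : u1 * v1 + u2 * v2 = 0.
  have := H (1, 0) (0, 1); rewrite /sqdist /=.
  move: hu hv; rewrite /u1 /u2 /v1 /v2.
  set A1 := (T (1, 0)).1; set A2 := (T (1, 0)).2; set B1 := (T (0, 1)).1; set B2 := (T (0, 1)).2.
  move=> hu hv h; nra.
set s := u1 * v2 - u2 * v1.
have hs : s ^+ 2 = 1.
  have L : (u1 ^+ 2 + u2 ^+ 2) * (v1 ^+ 2 + v2 ^+ 2) = (u1 * v1 + u2 * v2) ^+ 2 + s ^+ 2.
    by rewrite /s; ring.
  by move: L; rewrite hu hv huv expr0n /= add0r mul1r => <-.
have hv1 : v1 = - s * u2.
  have L : (u1 ^+ 2 + u2 ^+ 2) * v1 = (u1 * v1 + u2 * v2) * u1 - s * u2 by rewrite /s; ring.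
  by move: L; rewrite hu huv mul1r mul0r sub0r mulNr.
have hv2 : v2 = s * u1.
  have L : (u1 ^+ 2 + u2 ^+ 2) * v2 = (u1 * v1 + u2 * v2) * u2 + s * u1 by rewrite /s; ring.
  by move: L; rewrite hu huv mul1r mul0r add0r.
have gen p : (T p).1 - t1 = u1 * p.1 - s * u2 * p.2 /\ (T p).2 - t2 = u2 * p.1 + s * u1 * p.2.
  set w1 := (T p).1 - t1; set w2 := (T p).2 - t2.
  have h0 : w1 ^+ 2 + w2 ^+ 2 = p.1 ^+ 2 + p.2 ^+ 2.
    have := H p (0, 0); rewrite /sqdist /= -/t1 -/t2 !subr0 => ->; done.
  have h1 : w1 * u1 + w2 * u2 = p.1.
    have := H p (1, 0); rewrite /sqdist /=.
    move: h0 hu; rewrite /w1 /w2 /u1 /u2.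
    set A1 := (T (1, 0)).1; set A2 := (T (1, 0)).2; set B1 := (T p).1; set B2 := (T p).2.
    move=> h0 hu h; nra.
  have h2 : w1 * v1 + w2 * v2 = p.2.
    have := H p (0, 1); rewrite /sqdist /=.
    move: h0 hv; rewrite /w1 /w2 /v1 /v2.
    set A1 := (T (0, 1)).1; set A2 := (T (0, 1)).2; set B1 := (T p).1; set B2 := (T p).2.
    move=> h0 hv h; nra.
  have h3 : - u2 * w1 + u1 * w2 = s * p.2.
    rewrite -h2 hv1 hv2.
    have -> : w1 * (- s * u2) + w2 * (s * u1) = s * (- u2 * w1 + u1 * w2) by ring.
    by rewrite mulrA -expr2 hs mul1r.
  split.
    have L : (u1 ^+ 2 + u2 ^+ 2) * w1 = (w1 * u1 + w2 * u2) * u1 - (- u2 * w1 + u1 * w2) * u2 by ring.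
    by move: L; rewrite hu h1 h3 mul1r => ->; ring.
  have L : (u1 ^+ 2 + u2 ^+ 2) * w2 = (w1 * u1 + w2 * u2) * u2 + (- u2 * w1 + u1 * w2) * u1 by ring.
  by move: L; rewrite hu h1 h3 mul1r => ->; ring.
exists (u1, u2), (t1, t2); split; first exact: hu.
have e2 : (s - 1) * (s + 1) = s ^+ 2 - 1 by ring.
rewrite hs subrr in e2; move: e2.
move/eqP; rewrite mulf_eq0 => /orP [/eqP e|/eqP e].
  have s1 : s = 1 by move: e => ?; lra.
  left => p; have [g1 g2] := gen p; move: g1 g2; rewrite s1 !mul1r => g1 g2.
  by apply: injective_projections => /=; lra.
have s1 : s = -1 by move: e => ?; lra.
right => p; have [g1 g2] := gen p; move: g1 g2; rewrite s1 !mulN1r => g1 g2.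
by apply: injective_projections => /=; lra.
Qed.

End Geo.

Section Curve.
Variable R : realType.
Notation MP := {mpoly R[2]}.

Lemma mev_pt (f : MP) (v : 'I_2 -> R) : f.@[v] = f.@[pt2 (v i0, v i1)].
Proof. apply: meval_eq => k; rewrite /pt2; case: k => [[|[|k]] Hk] //=; by congr (v _); apply/val_inj. Qed.

Lemma pt2_0 (x y : R) : pt2 (x, y) i0 = x. Proof. by []. Qed.
Lemma pt2_1 (x y : R) : pt2 (x, y) i1 = y. Proof. by []. Qed.

Lemma line_A (g : MP) (p D : R * R) :
  (forall k : nat, g.@[pt2 (p.1 + k%:R * D.1, p.2 + k%:R * D.2)] = 0) ->
  forall s : R, g.@[pt2 (p.1 + s * D.1, p.2 + s * D.2)] = 0.
Proof.
move=> hk.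
set hx : {poly R} := Poly [:: p.1; D.1].
set hy : {poly R} := Poly [:: p.2; D.2].
set hw : {poly R} := Poly [:: 1].
have ev_x s : hx.[s] = p.1 + s * D.1 by rewrite /hx horner_Poly /=; ring.
have ev_y s : hy.[s] = p.2 + s * D.2 by rewrite /hy horner_Poly /=; ring.
have ev_w s : hw.[s] = 1 by rewrite /hw horner_Poly /=; ring.
have key s : (subst g hx hy hw).[s] = g.@[pt2 (p.1 + s * D.1, p.2 + s * D.2)].
  by rewrite subst_eval ev_w ?oner_eq0 // ev_x ev_y !divr1 expr1n mul1r.
have G0 : subst g hx hy hw = 0.
  apply: (@poly_many_roots _ _ [seq (k%:R : R) | k <- iota 0 (msize g).+1]).
  - exact: natr_uniq.
  - by apply/allP => x /mapP [k _ ->]; rewrite /root key hk.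
  - rewrite size_map size_iota.
    have sx : (size hx <= 2)%N by exact: size_Poly.
    have sy : (size hy <= 2)%N by exact: size_Poly.
    have sw : (size hw <= 2)%N by apply: leq_trans (size_Poly _) _.
    apply: leq_trans (@subst_size _ g hx hy hw 1 sx sy sw) _.
    by rewrite mul1n; case: (msize g).
by move=> s; rewrite -key G0 horner0.
Qed.

End Curve.

Section Curve2.
Variable R : realType.
Notation MP := {mpoly R[2]}.

Lemma prod_eq (x y : R * R) : x.1 = y.1 -> x.2 = y.2 -> x = y.
Proof. by case: x y => ? ? [? ?] /= -> ->. Qed.

Lemma line_is_line (C : R * R -> Prop) (f : MP) (p D : R * R) :
  mirreducible f -> same_set C (zero_set f) -> D != (0, 0) ->
  (forall s, C (p.1 + s * D.1, p.2 + s * D.2)) -> is_line C.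
Proof.
move=> irr hCf nD hs.
have hz s : f.@[pt2 (p.1 + s * D.1, p.2 + s * D.2)] = 0 by apply/hCf.
have [D10|D1n] := eqVneq D.1 0.
  have D2n : D.2 != 0.
    by apply: contra nD => /eqP D20; apply/eqP; apply: prod_eq => /=; rewrite ?D10 ?D20.
  have hL : forall v : 'I_2 -> R, v i0 = 0 * v i1 + p.1 -> f.@[v] = 0.
    move=> v hv; rewrite mev_pt; set s := (v i1 - p.2) / D.2.
    have -> : (v i0, v i1) = (p.1 + s * D.1, p.2 + s * D.2).
      apply: prod_eq => /=; first by rewrite hv D10; ring.
      by rewrite /s divfK // addrC subrK.
    exact: hz.
  have [c [c0 hc]] := @line_core R f i0 i1 0 p.1 isT irr hL.
  exists 1, 0, (- p.1); split; first by apply/eqP => -[] /eqP; rewrite oner_eq0.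
  move=> q; split => [/hCf|hq].
    rewrite /zero_set hc /= => /eqP; rewrite mulf_eq0 (negbTE c0) /= => /eqP ?; lra.
  apply/hCf; rewrite /zero_set hc /=; apply/eqP; rewrite mulf_eq0; apply/orP; right.
  apply/eqP; lra.
set al := D.2 / D.1; set be := p.2 - al * p.1.
have hL : forall v : 'I_2 -> R, v i1 = al * v i0 + be -> f.@[v] = 0.
  move=> v hv; rewrite mev_pt; set s := (v i0 - p.1) / D.1.
  have -> : (v i0, v i1) = (p.1 + s * D.1, p.2 + s * D.2).
    apply: prod_eq => /=; first by rewrite /s divfK // addrC subrK.
    rewrite hv /be /al /s; field; exact: D1n.
  exact: hz.
have [c [c0 hc]] := @line_core R f i1 i0 al be isT irr hL.
exists (- al), 1, (- be); split; first by apply/eqP => -[] _ /eqP; rewrite oner_eq0.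
move=> q; split => [/hCf|hq].
  rewrite /zero_set hc /= => /eqP; rewrite mulf_eq0 (negbTE c0) /= => /eqP ?; lra.
apply/hCf; rewrite /zero_set hc /=; apply/eqP; rewrite mulf_eq0; apply/orP; right.
apply/eqP; lra.
Qed.

End Curve2.

Section Curve3.
Variable R : realType.
Notation MP := {mpoly R[2]}.

Lemma param_alg (a b al be c1 r z1 : R) : a != 1 -> a ^+ 2 + b ^+ 2 = 1 ->
  z1 = al * a - be * b ->
  (c1 - r * al) + (- (2 * r * be)) * (b / (1 - a)) + (c1 + r * al) * (b / (1 - a)) ^+ 2
  = (1 + (b / (1 - a)) ^+ 2) * (c1 + r * z1).
Proof.
move=> a1 hab ->.
have ha : 1 - a != 0 by rewrite subr_eq0 eq_sym.
have -> : (b / (1 - a)) ^+ 2 = (1 + a) / (1 - a).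
  rewrite expr_div_n (_ : b ^+ 2 = (1 - a) * (1 + a)); last by move: hab => ?; nra.
  by field; try exact: ha.
by field; try exact: ha.
Qed.

Lemma param_alg2 (a b al be c2 r z2 : R) : a != 1 -> a ^+ 2 + b ^+ 2 = 1 ->
  z2 = be * a + al * b ->
  (c2 - r * be) + (2 * r * al) * (b / (1 - a)) + (c2 + r * be) * (b / (1 - a)) ^+ 2
  = (1 + (b / (1 - a)) ^+ 2) * (c2 + r * z2).
Proof.
move=> a1 hab ->.
have ha : 1 - a != 0 by rewrite subr_eq0 eq_sym.
have -> : (b / (1 - a)) ^+ 2 = (1 + a) / (1 - a).
  rewrite expr_div_n (_ : b ^+ 2 = (1 - a) * (1 + a)); last by move: hab => ?; nra.
  by field; try exact: ha.
by field; try exact: ha.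
Qed.

Lemma Poly3E (x0 x1 x2 t : R) : (Poly [:: x0; x1; x2]).[t] = x0 + x1 * t + x2 * t ^+ 2.
Proof. rewrite horner_Poly /=; ring. Qed.

Lemma onepsq_neq0 (t : R) : 1 + t ^+ 2 != 0.
Proof. by rewrite addrC sq1_pos. Qed.

Definition on_circ (c : R * R) (r : R) (q : R * R) :=
  (q.1 - c.1) ^+ 2 + (q.2 - c.2) ^+ 2 = r ^+ 2.

Lemma circle_A (C : R * R -> Prop) (g : MP) (c : R * R) (r : R) (L : seq (R * R)) :
  0 < r -> same_set C (zero_set g) -> uniq L ->
  (forall q, q \in L -> on_circ c r q /\ C q) ->
  ((2 * (msize g).-1).+1 <= size L)%N ->
  exists M, forall q, on_circ c r q -> q != M -> C q.
Proof.
move=> r0 hCg uL hL sL.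
have rn : r != 0 := lt0r_neq0 r0.
pose cand (k : nat) : R * R := (c.1 + r * s1 k%:R, c.2 + r * s2 k%:R).
set cands := [seq cand k | k <- iota 0 (size L).+1].
have ucands : uniq cands.
  rewrite map_inj_uniq ?iota_uniq // => k l [] /addrI /(mulfI rn) /s1_inj.
  done.
have : ~~ all (mem L) cands.
  apply/negP => /allP sub.
  have := uniq_leq_size ucands sub.
  by rewrite size_map size_iota ltnn.
case/allPn => M /mapP [k _ ->] MnL.
pose al := s1 (k%:R : R); pose be := s2 (k%:R : R).
have candk : cand k = (c.1 + r * al, c.2 + r * be) by [].
rewrite candk in MnL *.
set M0 := (c.1 + r * al, c.2 + r * be).
exists M0.
have MnL' : M0 \notin L := MnL.
have hab0 : al ^+ 2 + be ^+ 2 = 1 := s12 _.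
set hx : {poly R} := Poly [:: c.1 - r * al; - (2 * r * be); c.1 + r * al].
set hy : {poly R} := Poly [:: c.2 - r * be; 2 * r * al; c.2 + r * be].
set hw : {poly R} := Poly [:: 1; 0; 1].
have ew t : hw.[t] = 1 + t ^+ 2 by rewrite Poly3E; ring.
pose tpar (q : R * R) :=
  let z1 := (q.1 - c.1) / r in let z2 := (q.2 - c.2) / r in
  (- be * z1 + al * z2) / (1 - (al * z1 + be * z2)).
have param q : on_circ c r q -> q != M0 ->
    hx.[tpar q] / hw.[tpar q] = q.1 /\ hy.[tpar q] / hw.[tpar q] = q.2.
  move=> hq hM.
  set z1 := (q.1 - c.1) / r; set z2 := (q.2 - c.2) / r.
  have hz : z1 ^+ 2 + z2 ^+ 2 = 1.
    rewrite /z1 /z2 !expr_div_n -mulrDl hq divff //; exact: expf_neq0.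
  set a := al * z1 + be * z2; set b := - be * z1 + al * z2.
  have hab : a ^+ 2 + b ^+ 2 = 1.
    have -> : a ^+ 2 + b ^+ 2 = (al ^+ 2 + be ^+ 2) * (z1 ^+ 2 + z2 ^+ 2) by rewrite /a /b; ring.
    by rewrite hab0 hz mul1r.
  have hz1 : z1 = al * a - be * b.
    have -> : al * a - be * b = (al ^+ 2 + be ^+ 2) * z1 by rewrite /a /b; ring.
    by rewrite hab0 mul1r.
  have hz2 : z2 = be * a + al * b.
    have -> : be * a + al * b = (al ^+ 2 + be ^+ 2) * z2 by rewrite /a /b; ring.
    by rewrite hab0 mul1r.
  have a1 : a != 1.
    apply/eqP => a1; move/eqP: hM; apply.
    have b0 : b = 0.
      by apply/eqP; rewrite -sqrf_eq0; move: hab; rewrite a1 expr1n => ?; apply/eqP; lra.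
    have e1 : z1 = al by rewrite hz1 a1 b0; ring.
    have e2 : z2 = be by rewrite hz2 a1 b0; ring.
    apply: prod_eq => /=.
      by rewrite -e1 /z1 mulrC divfK // addrC subrK.
    by rewrite -e2 /z2 mulrC divfK // addrC subrK.
  have ht : tpar q = b / (1 - a) by [].
  have q1E : q.1 = c.1 + r * z1 by rewrite /z1 mulrC divfK // addrC subrK.
  have q2E : q.2 = c.2 + r * z2 by rewrite /z2 mulrC divfK // addrC subrK.
  rewrite ht ew !Poly3E; split.
    rewrite (param_alg c.1 r a1 hab hz1) mulrC mulKf ?onepsq_neq0 //.
  rewrite (param_alg2 c.2 r a1 hab hz2) mulrC mulKf ?onepsq_neq0 //.
set G := subst g hx hy hw.
have Gq q : on_circ c r q -> q != M0 ->
    G.[tpar q] = hw.[tpar q] ^+ (msize g).-1 * g.@[pt2 q].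
  move=> hq hM; have [e1 e2] := param q hq hM.
  rewrite subst_eval; last by rewrite ew onepsq_neq0.
  by rewrite e1 e2; case: q {hq hM e1 e2}.
have G0 : G = 0.
  apply: (@poly_many_roots _ _ [seq tpar q | q <- L]).
  - rewrite map_inj_in_uniq // => q q' hq hq' et.
    have [hq1 _] := hL q hq; have [hq1' _] := hL q' hq'.
    have nq : q != M0 by apply/eqP => e; rewrite e in hq; rewrite hq in MnL'.
    have nq' : q' != M0 by apply/eqP => e; rewrite e in hq'; rewrite hq' in MnL'.
    have [a1 a2] := param q hq1 nq; have [b1 b2] := param q' hq1' nq'.
    by apply: prod_eq; [rewrite -a1 -b1 et | rewrite -a2 -b2 et].
  - apply/allP => x /mapP [q hq ->]; rewrite /root.
    have [hq1 hCq] := hL q hq.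
    have nq : q != M0 by apply/eqP => e; rewrite e in hq; rewrite hq in MnL'.
    by rewrite Gq // (_ : g.@[pt2 q] = 0) ?mulr0 //; apply/hCg.
  - rewrite size_map; apply: leq_trans _ sL.
    have sx : (size hx <= 3)%N by exact: size_Poly.
    have sy : (size hy <= 3)%N by exact: size_Poly.
    have sw : (size hw <= 3)%N by exact: size_Poly.
    exact: (@subst_size _ g hx hy hw 2 sx sy sw).
move=> q hq hM; apply/hCg; rewrite /zero_set.
have := Gq q hq hM; rewrite G0 horner0 => /esym /eqP; rewrite mulf_eq0 => /orP [|/eqP //].
by rewrite expf_eq0 ew (negbTE (onepsq_neq0 _)) andbF.
Qed.

Lemma circle_is_circle (C : R * R -> Prop) (f : MP) (c : R * R) (r : R) (M : R * R) :
  0 < r -> mirreducible f -> same_set C (zero_set f) ->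
  (forall q, on_circ c r q -> q != M -> C q) -> is_circle C.
Proof.
move=> r0 irr hCf hq.
have [k [k0 hk]] := @circle_core R f c.1 c.2 r M r0 irr
  (fun x y hc hM => (proj1 (hCf (x, y)) (hq (x, y) hc hM))).
exists c.1, c.2, r; split => // q; split => [/hCf|hc].
  rewrite /zero_set hk /= => /eqP; rewrite mulf_eq0 (negbTE k0) /= => /eqP ?; lra.
apply/hCf; rewrite /zero_set hk /=; apply/eqP; rewrite mulf_eq0; apply/orP; right.
apply/eqP; lra.
Qed.

End Curve3.

Section Group.
Variable R : realType.
Variable C : R * R -> Prop.

Lemma sqr_pos (a : R) : a != 0 -> 0 < a ^+ 2.
Proof. by move=> a0; rewrite lt_def sqr_ge0 sqrf_eq0 a0. Qed.

Lemma pos_sq2 (a b : R) : (a, b) != (0, 0) -> 0 < a ^+ 2 + b ^+ 2.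
Proof.
move=> nab; have [a0|a0] := eqVneq a 0.
  have b0 : b != 0 by apply: contra nab => /eqP ->; rewrite a0.
  have := sqr_pos b0; have := sqr_ge0 a; move=> ? ?; lra.
have := sqr_pos a0; have := sqr_ge0 b; move=> ? ?; lra.
Qed.

Lemma sym_ext (T T' : R * R -> R * R) : T =1 T' -> symmetry_of C T -> symmetry_of C T'.
Proof.
move=> e [iT sT]; split.
  by move=> p q; rewrite -!e iT.
by move=> p; rewrite -sT; split => -[q [hq <-]]; exists q; split.
Qed.

Lemma sym_img (T : R * R -> R * R) q : symmetry_of C T -> C q -> C (T q).
Proof. by move=> [_ sT] hq; apply/sT; exists q. Qed.

Lemma sym_comp (S T : R * R -> R * R) :
  symmetry_of C S -> symmetry_of C T -> symmetry_of C (S \o T).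
Proof.
move=> [iS sS] [iT sT]; split.
  by move=> p q /=; rewrite iS iT.
move=> p; split.
  by move=> [q [hq <-]] /=; apply/sS; exists (T q); split => //; apply/sT; exists q.
move=> /sS [q1 [hq1 <-]]; move: hq1 => /sT [q2 [hq2 <-]]; by exists q2.
Qed.

Lemma iso_inj (T : R * R -> R * R) p q : isometry T -> T p = T q -> p = q.
Proof.
move=> iT e; have := iT p q; rewrite e /sqdist !subrr expr0n /= addr0 => /esym h.
have h1 : (p.1 - q.1) ^+ 2 = 0.
  by have := sqr_ge0 (p.1 - q.1); have := sqr_ge0 (p.2 - q.2); move=> ? ?; lra.
have h2 : (p.2 - q.2) ^+ 2 = 0.
  by have := sqr_ge0 (p.1 - q.1); have := sqr_ge0 (p.2 - q.2); move=> ? ?; lra.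
move/eqP: h1; rewrite sqrf_eq0 subr_eq0 => /eqP h1.
move/eqP: h2; rewrite sqrf_eq0 subr_eq0 => /eqP h2.
exact: injective_projections.
Qed.

Lemma sym_inv (T U : R * R -> R * R) :
  symmetry_of C T -> (forall p, U (T p) = p) -> (forall p, T (U p) = p) -> isometry U ->
  symmetry_of C U.
Proof.
move=> [iT sT] UT TU iU; split => // p; split.
  move=> [q [hq <-]]; move: hq; rewrite -{1}(TU q) => /sT [q' [hq' /(iso_inj iT) <-]] //.
move=> hp; exists (T p); split; last exact: UT.
by apply/sT; exists p.
Qed.

Definition rc (w c : R * R) (p : R * R) : R * R :=
  (w.1 * (p.1 - c.1) - w.2 * (p.2 - c.2) + c.1, w.2 * (p.1 - c.1) + w.1 * (p.2 - c.2) + c.2).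
Definition cnj (w : R * R) : R * R := (w.1, - w.2).

Lemma rc_iso (w c : R * R) : unit2 w -> isometry (rc w c).
Proof.
move=> hw p q; rewrite /sqdist /rc /=.
have -> : (w.1 * (p.1 - c.1) - w.2 * (p.2 - c.2) + c.1 - (w.1 * (q.1 - c.1) - w.2 * (q.2 - c.2) + c.1)) ^+ 2 +
  (w.2 * (p.1 - c.1) + w.1 * (p.2 - c.2) + c.2 - (w.2 * (q.1 - c.1) + w.1 * (q.2 - c.2) + c.2)) ^+ 2
  = (w.1 ^+ 2 + w.2 ^+ 2) * ((p.1 - q.1) ^+ 2 + (p.2 - q.2) ^+ 2) by ring.
by rewrite hw mul1r.
Qed.

Lemma unit2_cnj (w : R * R) : unit2 w -> unit2 (cnj w).
Proof. by rewrite /unit2 /cnj /= sqrrN. Qed.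

Lemma rc_cnj (w c p : R * R) : unit2 w -> rc w c (rc (cnj w) c p) = p.
Proof.
move=> hw; rewrite /rc /cnj /=.
apply: injective_projections => /=.
  have -> : w.1 * (w.1 * (p.1 - c.1) - - w.2 * (p.2 - c.2) + c.1 - c.1) -
    w.2 * (- w.2 * (p.1 - c.1) + w.1 * (p.2 - c.2) + c.2 - c.2) + c.1
    = (w.1 ^+ 2 + w.2 ^+ 2) * (p.1 - c.1) + c.1 by ring.
  by rewrite hw mul1r subrK.
have -> : w.2 * (w.1 * (p.1 - c.1) - - w.2 * (p.2 - c.2) + c.1 - c.1) +
    w.1 * (- w.2 * (p.1 - c.1) + w.1 * (p.2 - c.2) + c.2 - c.2) + c.2
    = (w.1 ^+ 2 + w.2 ^+ 2) * (p.2 - c.2) + c.2 by ring.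
by rewrite hw mul1r subrK.
Qed.

Lemma cnj_cnj w : cnj (cnj w) = w.
Proof. by case: w => ? ? /=; rewrite /cnj /= opprK. Qed.

Lemma rc_cnj' (w c p : R * R) : unit2 w -> rc (cnj w) c (rc w c p) = p.
Proof. by move=> hw; have := @rc_cnj (cnj w) c p (unit2_cnj hw); rewrite cnj_cnj. Qed.

Lemma rc_sym_inv (w c : R * R) : unit2 w -> symmetry_of C (rc w c) -> symmetry_of C (rc (cnj w) c).
Proof.
move=> hw hs; apply: (sym_inv hs) => p; first exact: rc_cnj'.
  exact: rc_cnj.
exact/rc_iso/unit2_cnj.
Qed.

Lemma rot_rc (w t c : R * R) : rot w t c = c -> rot w t =1 rc w c.
Proof.
move=> fx p; have e1 := congr1 fst fx; have e2 := congr1 snd fx.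
move: e1 e2; rewrite /rot /rc /= => e1 e2.
by apply: injective_projections => /=; lra.
Qed.

Lemma rot_fix (w t : R * R) : w != (1, 0) -> exists c, rot w t c = c.
Proof.
move=> nw.
set dl := (1 - w.1) ^+ 2 + w.2 ^+ 2.
have dl0 : dl != 0.
  apply: lt0r_neq0; apply: pos_sq2; apply: contra nw => /eqP [] h1 h2.
  by apply/eqP; apply: injective_projections => /=; move: h1 h2 => ? ?; lra.
exists (((1 - w.1) * t.1 - w.2 * t.2) / dl, (w.2 * t.1 + (1 - w.1) * t.2) / dl).
rewrite /rot /=; apply: injective_projections => /=; rewrite /dl; field;
  by move: dl0; rewrite /dl.
Qed.

Lemma comm_transl (w z c e : R * R) :
  unit2 w -> unit2 z -> w != (1, 0) -> z != (1, 0) -> c != e ->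
  symmetry_of C (rc w c) -> symmetry_of C (rc z e) ->
  exists D : R * R, D != (0, 0) /\ symmetry_of C (rot (1, 0) D).
Proof.
move=> hw hz nw nz nce sw sz.
set d1 := c.1 - e.1; set d2 := c.2 - e.2.
set X1 := d1 * (1 - w.1) + d2 * w.2; set X2 := - d1 * w.2 + d2 * (1 - w.1).
exists (X1 * (1 - z.1) + X2 * z.2, X2 * (1 - z.1) - X1 * z.2); split.
  apply/negP => /eqP E.
  have : 0 < (X1 * (1 - z.1) + X2 * z.2) ^+ 2 + (X2 * (1 - z.1) - X1 * z.2) ^+ 2.
    have -> : (X1 * (1 - z.1) + X2 * z.2) ^+ 2 + (X2 * (1 - z.1) - X1 * z.2) ^+ 2
      = (X1 ^+ 2 + X2 ^+ 2) * ((1 - z.1) ^+ 2 + (- z.2) ^+ 2) by ring.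
    have -> : X1 ^+ 2 + X2 ^+ 2 = (d1 ^+ 2 + d2 ^+ 2) * ((1 - w.1) ^+ 2 + (- w.2) ^+ 2)
      by rewrite /X1 /X2; ring.
    apply: mulr_gt0; first apply: mulr_gt0; apply: pos_sq2.
    - apply: contra nce => /eqP [] h1 h2; apply/eqP.
      by apply: injective_projections; move: h1 h2; rewrite /d1 /d2 => ? ?; lra.
    - apply: contra nw => /eqP [] h1 h2; apply/eqP.
      by apply: injective_projections => /=; move: h1 h2 => ? ?; lra.
    - apply: contra nz => /eqP [] h1 h2; apply/eqP.
      by apply: injective_projections => /=; move: h1 h2 => ? ?; lra.
  by case: E => -> ->; rewrite expr0n /= addr0 ltxx.
have st : symmetry_of C (rc w c \o rc z e \o rc (cnj w) c \o rc (cnj z) e).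
  apply: sym_comp; last exact: rc_sym_inv.
  apply: sym_comp; last exact: rc_sym_inv.
  exact: sym_comp.
apply: sym_ext st => p.
rewrite /rot /rc /cnj /=.
move: hw hz; rewrite /unit2 => hw hz.
apply: injective_projections => /=.
  set L := (X in X = _).
  have -> : L = p.1 + (X1 * (1 - z.1) + X2 * z.2)
     + (w.1 ^+ 2 + w.2 ^+ 2 - 1) * (z.1 * (e.1 - c.1) - z.2 * (e.2 - c.2)
           + (z.1 ^+ 2 + z.2 ^+ 2) * (p.1 - e.1))
     + (z.1 ^+ 2 + z.2 ^+ 2 - 1) * (p.1 - e.1).
    by rewrite /L /X1 /X2 /d1 /d2; ring.
  by rewrite hw hz !subrr !mul0r !addr0; ring.
set L := (X in X = _).
have -> : L = p.2 + (X2 * (1 - z.1) - X1 * z.2)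
   + (w.1 ^+ 2 + w.2 ^+ 2 - 1) * (z.2 * (e.1 - c.1) + z.1 * (e.2 - c.2)
         + (z.1 ^+ 2 + z.2 ^+ 2) * (p.2 - e.2))
   + (z.1 ^+ 2 + z.2 ^+ 2 - 1) * (p.2 - e.2).
  by rewrite /L /X1 /X2 /d1 /d2; ring.
by rewrite hw hz !subrr !mul0r !addr0; ring.
Qed.

End Group.

Section Main.
Variable R : realType.
Notation MP := {mpoly R[2]}.
Variable C : R * R -> Prop.
Variables (f g : MP).
Hypothesis irr : mirreducible f.
Hypothesis hCf : same_set C (zero_set f).
Hypothesis hCg : same_set C (zero_set g).
Hypothesis hinf : infinite_set C.
Hypothesis nline : ~ is_line C.
Hypothesis ncirc : ~ is_circle C.

Lemma no_translation (D : R * R) : D != (0, 0) -> symmetry_of C (rot (1, 0) D) -> False.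
Proof.
move=> nD sD.
have [p [Cp _]] := hinf [::].
have hk k : C (p.1 + k%:R * D.1, p.2 + k%:R * D.2).
  elim: k => [|k IH].
    by rewrite !mul0r !addr0; case: p Cp.
  have -> : (p.1 + k.+1%:R * D.1, p.2 + k.+1%:R * D.2) =
            rot (1, 0) D (p.1 + k%:R * D.1, p.2 + k%:R * D.2).
    by rewrite /rot /=; apply: injective_projections => /=; rewrite -addn1 natrD; ring.
  exact: sym_img.
have hg k : g.@[pt2 (p.1 + k%:R * D.1, p.2 + k%:R * D.2)] = 0 by apply/hCg.
have := line_A hg => hl.
apply: nline; apply: (line_is_line irr hCf nD) => s.
by apply/hCg; apply: hl.
Qed.

Lemma rot_id_fix (c : R * R) : rot (1, 0) (0, 0) c = c.
Proof. by rewrite /rot /=; apply: injective_projections => /=; ring. Qed.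

Lemma rot_inj_fix (w t w' t' c p : R * R) :
  rot w t c = c -> rot w' t' c = c -> rot w t p = rot w' t' p -> p != c -> (w, t) = (w', t').
Proof.
move=> f1 f2 e pc.
move: (congr1 fst f1) (congr1 snd f1) (congr1 fst f2) (congr1 snd f2) (congr1 fst e) (congr1 snd e).
rewrite /rot /= => a1 a2 b1 b2 e1 e2.
set d1 := p.1 - c.1; set d2 := p.2 - c.2.
set u1 := w.1 - w'.1; set u2 := w.2 - w'.2.
have E1 : u1 * d1 - u2 * d2 = 0 by rewrite /u1 /u2 /d1 /d2; lra.
have E2 : u2 * d1 + u1 * d2 = 0 by rewrite /u1 /u2 /d1 /d2; lra.
have pd : 0 < d1 ^+ 2 + d2 ^+ 2.
  apply: pos_sq2; apply: contra pc => /eqP [] h1 h2; apply/eqP.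
  by apply: injective_projections; move: h1 h2; rewrite /d1 /d2 => ? ?; lra.
have U1 : u1 = 0.
  have : u1 * (d1 ^+ 2 + d2 ^+ 2) = d1 * (u1 * d1 - u2 * d2) + d2 * (u2 * d1 + u1 * d2) by ring.
  rewrite E1 E2 !mulr0 addr0 => /eqP; rewrite mulf_eq0 (negbTE (lt0r_neq0 pd)) orbF.
  by move/eqP.
have U2 : u2 = 0.
  have : u2 * (d1 ^+ 2 + d2 ^+ 2) = - d2 * (u1 * d1 - u2 * d2) + d1 * (u2 * d1 + u1 * d2) by ring.
  rewrite E1 E2 !mulr0 addr0 => /eqP; rewrite mulf_eq0 (negbTE (lt0r_neq0 pd)) orbF.
  by move/eqP.
have ew : w = w'.
  by apply: injective_projections; move: U1 U2; rewrite /u1 /u2 => ? ?; lra.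
have et : t = t'.
  apply: injective_projections; move: U1 U2 a1 a2 b1 b2; rewrite /u1 /u2 ew => ? ? ? ? ? ?; lra.
by rewrite ew et.
Qed.

Lemma rot_iso (w t : R * R) : unit2 w -> isometry (rot w t).
Proof.
move=> hw p q; rewrite /sqdist /rot /=.
have -> : (w.1 * p.1 - w.2 * p.2 + t.1 - (w.1 * q.1 - w.2 * q.2 + t.1)) ^+ 2 +
  (w.2 * p.1 + w.1 * p.2 + t.2 - (w.2 * q.1 + w.1 * q.2 + t.2)) ^+ 2
  = (w.1 ^+ 2 + w.2 ^+ 2) * ((p.1 - q.1) ^+ 2 + (p.2 - q.2) ^+ 2) by ring.
by rewrite hw mul1r.
Qed.



Lemma direct_bound (S : seq ((R * R) * (R * R))) :
  uniq S -> (forall x, x \in S -> unit2 x.1 /\ symmetry_of C (rot x.1 x.2)) ->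
  (2 <= size S)%N -> ((2 * (msize g).-1).+1 <= size S)%N -> False.
Proof.
move=> uS hS s2 sS.
have idS x : x \in S -> x.1 = (1, 0) -> x = ((1, 0), (0, 0)).
  move=> xS x1; have [x20|x2n] := eqVneq x.2 (0, 0).
    by case: x x1 x20 {xS} => ? ? /= -> ->.
  have [_ sx] := hS x xS; rewrite x1 in sx.
  by case: (no_translation x2n sx).
have : has (fun x => x.1 != (1, 0)) S.
  case: (boolP (has _ _)) => // /hasPn hall; exfalso.
  have sub : {subset S <= [:: ((1, 0), (0, 0)) : (R * R) * (R * R)]}.
    move=> x xS; have := hall x xS; rewrite negbK => /eqP x1.
    by rewrite (idS x xS x1) mem_seq1.
  by have := uniq_leq_size uS sub; rewrite /= leqNgt s2.
case/hasP => x0 x0S x0n.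
have [u0 s0] := hS x0 x0S.
have [c fc] := rot_fix x0.2 x0n.
have fixall y : y \in S -> rot y.1 y.2 c = c.
  move=> yS; have [y1|y1n] := eqVneq y.1 (1, 0).
    by rewrite (idS y yS y1) rot_id_fix.
  have [e fe] := rot_fix y.2 y1n.
  have [ec|nce] := eqVneq c e; first by rewrite ec.
  exfalso; have [uy sy] := hS y yS.
  have sx' : symmetry_of C (rc x0.1 c) := sym_ext (rot_rc fc) s0.
  have sy' : symmetry_of C (rc y.1 e) := sym_ext (rot_rc fe) sy.
  have [D [nD sD]] := comm_transl u0 uy x0n y1n nce sx' sy'.
  exact: no_translation nD sD.
have [p [Cp pnc]] := hinf [:: c].
have pc : p != c by move: pnc; rewrite mem_seq1.
set r2 := sqdist p c.
have r2p : 0 < r2.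
  apply: pos_sq2; apply: contra pc => /eqP [] h1 h2; apply/eqP.
  by apply: injective_projections; move: h1 h2 => ? ?; lra.
set r := Num.sqrt r2.
have r0 : 0 < r by rewrite sqrtr_gt0.
have hr : r ^+ 2 = r2 by rewrite sqr_sqrtr // ltW.
set L := [seq rot y.1 y.2 p | y <- S].
have uL : uniq L.
  rewrite map_inj_in_uniq // => y y' yS y'S e.
  have := rot_inj_fix (fixall y yS) (fixall y' y'S) e pc.
  by case: y {yS e} => ? ?; case: y' {y'S} => ? ? /= ->.
have hL q : q \in L -> on_circ c r q /\ C q.
  case/mapP => y yS ->; have [uy sy] := hS y yS; split; last exact: sym_img.
  rewrite /on_circ hr /r2 -[in RHS](rot_iso y.2 uy p c) (fixall y yS).
  by [].
have sL : ((2 * (msize g).-1).+1 <= size L)%N by rewrite size_map.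
have [M hM] := circle_A r0 hCg uL hL sL.
exact: ncirc (circle_is_circle r0 irr hCf hM).
Qed.

End Main.

Section Final.
Variable R : realType.

Definition compp (x y : (R * R) * (R * R)) : (R * R) * (R * R) :=
  ((x.1.1 * y.1.1 + x.1.2 * y.1.2, x.1.2 * y.1.1 - x.1.1 * y.1.2),
   (x.1.1 * y.2.1 + x.1.2 * y.2.2 + x.2.1, x.1.2 * y.2.1 - x.1.1 * y.2.2 + x.2.2)).

Lemma compp_rfl (x y : (R * R) * (R * R)) p :
  rfl x.1 x.2 (rfl y.1 y.2 p) = rot (compp x y).1 (compp x y).2 p.
Proof. by rewrite /rfl /rot /compp /=; apply: injective_projections => /=; ring. Qed.

Lemma compp_unit (x y : (R * R) * (R * R)) :
  unit2 x.1 -> unit2 y.1 -> unit2 (compp x y).1.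
Proof.
rewrite /unit2 /compp /= => hx hy.
have -> : (x.1.1 * y.1.1 + x.1.2 * y.1.2) ^+ 2 + (x.1.2 * y.1.1 - x.1.1 * y.1.2) ^+ 2 =
  (x.1.1 ^+ 2 + x.1.2 ^+ 2) * (y.1.1 ^+ 2 + y.1.2 ^+ 2) by ring.
by rewrite hx hy mul1r.
Qed.

End Final.

Theorem lemma2p6 (R : realType) (C : R * R -> Prop) (d : nat) :
  plane_curve C -> irreducible_curve C -> curve_degree C d ->
  ~ is_line C -> ~ is_circle C ->
  forall (n : nat) (T : 'I_n -> (R * R -> R * R)),
    (forall i j, i != j -> T i <> T j) ->
    (forall i, symmetry_of C (T i)) ->
    (n <= 4 * d)%N.
Proof.
move=> [hinf _] [f [irr hCf]] [[g [g0 hCg dg]] _] nl nc n T hT hS.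
have [p0 [Cp0 _]] := hinf [::].
have dE : d = (msize g).-1 := esym dg.
have d1 : (1 <= d)%N.
  rewrite dE; case: ltnP => // hs.
  have hs' : (msize g <= 1)%N by move: hs; case: (msize g) => [|[|]].
  have gc := msize1_polyC hs'.
  have : g.@[pt2 p0] = 0 by apply/hCg.
  rewrite gc mevalC => e; move: g0; rewrite gc e mpolyC0 eqxx //.
have ex i : exists x : (R * R) * (R * R) * bool,
    unit2 x.1.1 /\ (if x.2 then T i =1 rfl x.1.1 x.1.2 else T i =1 rot x.1.1 x.1.2).
  have [w [t [hw [e|e]]]] := iso_struct (proj1 (hS i)).
    by exists (w, t, false).
  by exists (w, t, true).
pose X i := proj1_sig (constructive_indefinite_description _ (ex i)).
have PX i : unit2 (X i).1.1 /\
    (if (X i).2 then T i =1 rfl (X i).1.1 (X i).1.2 else T i =1 rot (X i).1.1 (X i).1.2).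
  exact: (proj2_sig (constructive_indefinite_description _ (ex i))).
have Teq i j : T i =1 T j -> i = j.
  move=> e; apply/eqP; apply: contraT => nij; case: (hT i j nij).
  exact: functional_extensionality.
rewrite leqNgt; apply/negP => hn.
set a := fun i => (X i).2.
set I1 := filter a (enum 'I_n).
set I0 := filter (predC a) (enum 'I_n).
have hsz : (size I1 + size I0 = n)%N.
  by rewrite !size_filter count_predC size_enum_ord.
have uI0 : uniq I0 by rewrite filter_uniq ?enum_uniq.
have uI1 : uniq I1 by rewrite filter_uniq ?enum_uniq.
have [big0|small0] := leqP (2 * d).+1 (size I0).
  set S := [seq (X i).1 | i <- I0].
  apply: (@direct_bound R C f g irr hCf hCg hinf nl nc S).
  - rewrite map_inj_in_uniq // => i j; rewrite !mem_filter /= => /andP [hi _] /andP [hj _] e.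
    have [_ ei] := PX i; have [_ ej] := PX j.
    move: hi hj ei ej; rewrite /a => /negbTE -> /negbTE ->; rewrite e => ei ej.
    by apply: Teq => p; rewrite ei ej.
  - move=> x /mapP [i]; rewrite mem_filter /= => /andP [hi _] ->.
    have [ui ei] := PX i; move: hi ei; rewrite /a => /negbTE -> ei.
    by split => //; apply: sym_ext ei (hS i).
  - by rewrite size_map; apply: leq_trans big0; rewrite ltnS; lia.
  - by rewrite size_map -dE.
have big1 : ((2 * d).+1 <= size I1)%N by lia.
case E1 : I1 => [|i0 rest]; first by rewrite E1 in big1.
have i0I : i0 \in I1 by rewrite E1 mem_head.
have hi0 : a i0 by move: i0I; rewrite mem_filter => /andP [].
have [u0 e0] := PX i0; move: e0; rewrite -/(a i0) hi0 => e0.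
set S := [seq compp (X i0).1 (X i).1 | i <- I1].
have comp_eq i : i \in I1 -> T i0 \o T i =1 rot (compp (X i0).1 (X i).1).1 (compp (X i0).1 (X i).1).2.
  rewrite mem_filter => /andP [hi _] p /=.
  have [_ ei] := PX i; move: ei; rewrite -/(a i) hi => ei.
  by rewrite ei e0 compp_rfl.
apply: (@direct_bound R C f g irr hCf hCg hinf nl nc S).
- rewrite map_inj_in_uniq // => i j hi hj e.
  apply: Teq => p; apply: (iso_inj (proj1 (hS i0))).
  have h1 := comp_eq i hi p; have h2 := comp_eq j hj p; rewrite e in h1.
  by move: h1 h2 => /= -> ->.
- move=> x /mapP [i hi ->]; split.
    have [ui _] := PX i; exact: compp_unit.
  by apply: sym_ext (comp_eq i hi) _; apply: sym_comp.
- by rewrite size_map; apply: leq_trans big1; rewrite ltnS; lia.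
- by rewrite size_map -dE.
Qed.
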